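(* Let $f:\mathbb{R}^n\to\mathbb{R}_{>0}$ be a twice continuously differentiable convex function that is $\gamma$-second order robust and $\mu$-multiplicatively smooth with respect to the $\ell_2$ norm, for some $\gamma,\mu>0$. Let $\mathbf{x}^0\in\mathbb{R}^n$, let $\mathbf{x}^*\in\mathbb{R}^n$ be arbitrary, and $R:=\|\mathbf{x}^0-\mathbf{x}^*\|_2$. Consider gradient descent $\mathbf{x}^{t+1}=\mathbf{x}^t-\eta_t\nabla f(\mathbf{x}^t)$ with $\eta_t=\min\bigl\{\frac{1}{2\mu f(\mathbf{x}^t)},\frac{1}{\gamma\|\nabla f(\mathbf{x}^t)\|_2}\bigr\}$. Let $\delta\in(0,1)$, $\varepsilon>0$. Then there is an absolute constant $c>0$ such that $f(\mathbf{x}^T)\le(1+\delta)f(\mathbf{x}^* )+\varepsilon$ whenever $$T\ge c\Bigl(\mu R^2\Bigl(\frac1\delta+\log\frac{f(\mathbf{x}^0)-f(\mathbf{x}^* )}{\varepsilon}\Bigr)+\gamma R\log\frac{f(\mathbf{x}^0)-f(\mathbf{x}^* )}{\varepsilon}\Bigr).$$ In particular, if $\gamma\le2\sqrt\beta$ and $\mu\le\beta/m$ for some $\beta>0$ and positive integer $m$, this holds whenever $$T\ge c'\Bigl(\frac{\beta R^2}{m}\Bigl(\frac1\delta+\log\frac{f(\mathbf{x}^0)-f(\mathbf{x}^* )}{\varepsilon}\Bigr)+\sqrt\beta R\log\frac{f(\mathbf{x}^0)-f(\mathbf{x}^* )}{\varepsilon}\Bigr)$$ for an absolute constant $c'>0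$.
   Context: A twice differentiable $f:\mathbb{R}^n\to\mathbb{R}$ is $q$-second order robust with respect to a norm $\|\cdot\|$ if for all $\mathbf{x},\mathbf{x}'$ with $\|\mathbf{x}'-\mathbf{x}\|\le1/q$, $\tfrac12\nabla^2f(\mathbf{x})\preceq\nabla^2f(\mathbf{x}')\preceq2\nabla^2f(\mathbf{x})$. A twice differentiable $f:\mathbb{R}^n\to\mathbb{R}_{>0}$ is $\mu$-multiplicatively smooth with respect to $\|\cdot\|$ if for all $\mathbf{x},\tilde{\mathbf{x}}$, $\tilde{\mathbf{x}}^\top\nabla^2f(\mathbf{x})\tilde{\mathbf{x}}\le\mu f(\mathbf{x})\|\tilde{\mathbf{x}}\|^2$. When $\nabla f(\mathbf{x}^t)=\mathbf{0}$ the second term in the step size is read as $+\infty$. *)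

(* Defs.v *)
From HB Require Import structures.
From mathcomp Require Import all_boot all_order all_algebra.
From mathcomp Require Import all_classical all_reals all_analysis.
Set Implicit Arguments. Unset Strict Implicit. Unset Printing Implicit Defensive.
Import Order.TTheory GRing.Theory Num.Theory.
Import numFieldNormedType.Exports.
Local Open Scope ring_scope.

Section Defs.
Variables (R : realType) (n : nat).
Implicit Types (f : 'rV[R]_n -> R) (x y v : 'rV[R]_n).

Definition ebasis (i : 'I_n) : 'rV[R]_n := \row_(j < n) ((j == i)%:R).

Definition partial f (i : 'I_n) : 'rV[R]_n -> R := fun x => 'D_(ebasis i) f x.

Definition twice_cont_diff f : Prop :=
  continuous f /\
  (forall i x, derivable f x (ebasis i)) /\
  (forall i, continuous (partial f i)) /\
  (forall i j x, derivable (partial f i) x (ebasis j)) /\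
  (forall i j, continuous (partial (partial f i) j)).

Definition grad f x : 'rV[R]_n := \row_(i < n) partial f i x.
Definition hessian f x : 'M[R]_n := \matrix_(i < n, j < n) partial (partial f i) j x.

Definition l2norm x : R := Num.sqrt (\sum_(i < n) x ord0 i ^+ 2).

Definition qform (A : 'M[R]_n) v : R := \sum_(i < n) \sum_(j < n) v ord0 i * A i j * v ord0 j.

Definition loewner_le (A B : 'M[R]_n) : Prop := forall v, qform A v <= qform B v.

Definition convex_fun f : Prop :=
  forall x y (t : R), 0 <= t <= 1 ->
    f ((1 - t) *: x + t *: y) <= (1 - t) * f x + t * f y.

Definition second_order_robust (q : R) f : Prop :=
  forall x x', l2norm (x' - x) <= q^-1 ->
    loewner_le ((1/2 : R) *: hessian f x) (hessian f x') /\
    loewner_le (hessian f x') (2 *: hessian f x).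

Definition mult_smooth (mu : R) f : Prop :=
  (forall x, 0 < f x) /\
  forall x v, qform (hessian f x) v <= mu * f x * l2norm v ^+ 2.

(* step size; when grad f x = 0 the second term is +oo *)
Definition step_size (gamma mu : R) f x : R :=
  if grad f x == 0 then (2 * mu * f x)^-1
  else Order.min (2 * mu * f x)^-1 (gamma * l2norm (grad f x))^-1.

Fixpoint gd (gamma mu : R) f (x0 : 'rV[R]_n) (t : nat) : 'rV[R]_n :=
  match t with
  | 0 => x0
  | t'.+1 => let x := gd gamma mu f x0 t' in x - step_size gamma mu f x *: grad f x
  end.

End Defs.

(* Main.v *)
Require Import Defs.
From HB Require Import structures.
From mathcomp Require Import all_boot all_order all_algebra.
From mathcomp Require Import all_classical all_reals all_analysis.
From mathcomp Require Import ring lra.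
Import Order.TTheory GRing.Theory Num.Theory.
Import numFieldNormedType.Exports.
Local Open Scope ring_scope.
Local Open Scope classical_set_scope.
Set Implicit Arguments. Unset Strict Implicit.

Section S.
Context {R : realType}.

Lemma near0'P (P : R -> Prop) : (\forall t \near 0^', P t) <->
  exists2 d : R, 0 < d & forall t, `|t| < d -> t != 0 -> P t.
Proof.
split.
- move=> /nbhs_ballP [d d0 H]; exists d => // t td t0; apply: H => //.
  by rewrite /ball /= sub0r normrN.
- move=> [d d0 H]; apply/nbhs_ballP; exists d => // t; rewrite /ball /= sub0r normrN.
  by move=> td t0; apply: H.
Qed.

Lemma nearP {n : nat} (p : 'rV[R]_n) (P : 'rV[R]_n -> Prop) : (\forall y \near p, P y) <->
  exists2 d : R, 0 < d & forall y, `|p - y| < d -> P y.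
Proof.
rewrite nbhs_normP; split.
- by move=> [d d0 H]; exists d => // y yd; apply: H.
- by move=> [d d0 H]; exists d => // y yd; apply: H.
Qed.

Lemma is_derive_lim (f : R -> R) (a l : R) :
  (fun t => t^-1 * (f (t + a) - f a)) @ 0^' --> l -> is_derive a 1 f l.
Proof.
move=> H.
have E : (fun h : R => h^-1 *: ((f \o shift a) (h *: 1) - f a)) =
         (fun t => t^-1 * (f (t + a) - f a)).
  by apply/funext => t /=; rewrite /shift /= [_%:A]mulr1.
apply: DeriveDef.
  by rewrite /derivable E; apply/cvg_ex; exists l.
by rewrite /derive E; apply: cvg_lim.
Qed.

Lemma is_derive_limE (f : R -> R) (a l : R) :
  is_derive a 1 f l -> (fun t => t^-1 * (f (t + a) - f a)) @ 0^' --> l.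
Proof.
move=> [H1 H2].
have E : (fun h : R => h^-1 *: ((f \o shift a) (h *: 1) - f a)) =
         (fun t => t^-1 * (f (t + a) - f a)).
  by apply/funext => t /=; rewrite /shift /= [_%:A]mulr1.
move: H1 H2; rewrite /derivable /derive E => H1 <-.
exact: H1.
Qed.

Lemma line_derive {n : nat} (h : 'rV[R]_n -> R) (y w : 'rV[R]_n) (u0 : R) :
  derivable h (y + u0 *: w) w ->
  is_derive u0 1 (fun u => h (y + u *: w)) ('D_w h (y + u0 *: w)).
Proof.
move=> D; apply: is_derive_lim.
have E : (fun t => t^-1 * (h (y + (t + u0) *: w) - h (y + u0 *: w))) =
  (fun t => t^-1 *: ((h \o shift (y + u0 *: w)) (t *: w) - h (y + u0 *: w))).
  apply/funext => t /=; rewrite /shift /= scalerDl.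
  by rewrite addrCA.
rewrite E; exact: D.
Qed.
Lemma derive_cont (g dg : R -> R) :
  (forall u : R, is_derive u (1:R) g (dg u)) -> continuous g.
Proof.
move=> D x; apply: differentiable_continuous; apply/derivable1_diffP.
by case: (D x).
Qed.

Lemma MVT0 (g dg : R -> R) (b : R) :
  (forall u : R, is_derive u (1:R) g (dg u)) ->
  exists th, `|th| <= `|b| /\ g b - g 0 = dg th * b.
Proof.
move=> D; have C := derive_cont D.
have Cw : forall a c : R, {within `[a, c], continuous g}.
  by move=> a c; apply: continuous_subspaceT.
have [b0|b0] := leP 0 b.
  have [c cab E] := @MVT_segment R g dg 0 b b0 (fun x _ => D x) (Cw 0 b).
  exists c; rewrite E subr0; split => //.
  move: cab; rewrite in_itv /= => /andP[c0 cb].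
  by rewrite !ger0_norm // (le_trans c0 cb).
have [c cab E] := @MVT_segment R g dg b 0 (ltW b0) (fun x _ => D x) (Cw b 0).
exists c; split.
  move: cab; rewrite in_itv /= => /andP[c0 cb].
  by rewrite !ler0_norm ?lerN2 // ltW.
by apply/eqP; rewrite -opprB E sub0r mulrN opprK.
Qed.
Lemma L1 {n : nat} (h : 'rV[R]_n -> R) (k : 'I_n) (p w : 'rV[R]_n) (c : R) :
  (forall y, derivable h y (ebasis R k)) -> {for p, continuous (partial h k)} ->
  (fun t => t^-1 * (h (p + t *: w + (t * c) *: ebasis R k) - h (p + t *: w)))
     @ 0^' --> c * partial h k p.
Proof.
move=> Hd Hc; apply/cvgrPdist_lt => e e0.
have e'0 : 0 < e / (`|c| + 1) by rewrite divr_gt0 // ltr_pwDr.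
have H : \forall y \near p, `|partial h k p - partial h k y| < e / (`|c| + 1).
  by move: Hc => /cvgrPdist_lt; apply.
have [d d0 Hdd] := proj1 (nearP p _) H.
set W := `|w| + `|c| * `|ebasis R k|.
have W0 : 0 <= W by rewrite addr_ge0 // mulr_ge0.
apply/near0'P; exists (d / (W + 1)); first by rewrite divr_gt0 // ltr_pwDr.
move=> t td t0.
set g := fun u => h (p + t *: w + u *: ebasis R k).
have Dg : forall u : R, is_derive u (1:R) g (partial h k (p + t *: w + u *: ebasis R k)).
  by move=> u; apply: line_derive; apply: Hd.
have [th [thb E]] := MVT0 (t * c) Dg.
have -> : h (p + t *: w) = g 0 by rewrite /g scale0r addr0.
rewrite -/(g (t * c)) E.
set q := partial h k (p + t *: w + _).
have -> : t^-1 * (q * (t * c)) = c * q by field.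
rewrite -mulrBr normrM.
have Hxi : `|p - (p + t *: w + th *: ebasis R k)| < d.
  rewrite -addrA opprD addrA subrr add0r normrN.
  apply: (le_lt_trans (ler_normD _ _)); rewrite !normrZ.
  apply: (@le_lt_trans _ _ (`|t| * W)).
    rewrite /W mulrDr lerD2l mulrA; apply: ler_wpM2r => //.
    by apply: (le_trans thb); rewrite normrM.
  have := td; rewrite ltr_pdivlMr ?ltr_pwDr // => tdd.
  apply: le_lt_trans tdd; apply: ler_wpM2l => //; rewrite lerDl //.
have := Hdd _ Hxi => Hlt.
have c1 : 0 < `|c| + 1 by rewrite ltr_pwDr.
apply: (@le_lt_trans _ _ (`|c| * (e / (`|c| + 1)))).
  by apply: ler_wpM2l => //; apply: ltW.
rewrite mulrA ltr_pdivrMr // mulrC ltr_pM2l // ltrDl //.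
Qed.
Definition trunc {n : nat} (k : nat) (v : 'rV[R]_n) : 'rV[R]_n :=
  \row_(j < n) (if (j < k)%N then v ord0 j else 0).

Lemma core_k {n : nat} (h : 'rV[R]_n -> R) (p v : 'rV[R]_n) :
  (forall i y, derivable h y (ebasis R i)) -> (forall i, continuous (partial h i)) ->
  forall k, (k <= n)%N ->
  (fun t => t^-1 * (h (p + t *: trunc k v) - h p)) @ 0^' -->
    \sum_(i < n) (if (i < k)%N then v ord0 i * partial h i p else 0).
Proof.
move=> Hd Hc; elim=> [|k IH] kn.
  have -> : (fun t : R => t^-1 * (h (p + t *: trunc 0 v) - h p)) = (fun _ => 0).
    apply/funext => t; have -> : trunc 0 v = 0 by apply/rowP => j; rewrite !mxE.
    by rewrite scaler0 addr0 subrr mulr0.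
  rewrite big1 //; exact: cvg_cst.
have kn' : (k < n)%N by [].
set o := Ordinal kn'.
have Tr : trunc k.+1 v = trunc k v + v ord0 o *: ebasis R o.
  apply/rowP => j; rewrite !mxE.
  case: (ltngtP j k) => [jk|kj|jk].
  - have -> : (j == o) = false by apply/negbTE; rewrite -val_eqE /= neq_ltn jk.
    by rewrite ltnS (ltnW jk) mulr0 addr0.
  - have -> : (j == o) = false by apply/negbTE; rewrite -val_eqE /= neq_ltn kj orbT.
    by rewrite ltnS leqNgt kj /= mulr0 addr0.
  - have jo : j = o by apply/val_inj; rewrite /= jk.
    by rewrite jk ltnSn jo eqxx add0r mulr1.
have Sk : \sum_(i < n) (if (i < k.+1)%N then v ord0 i * partial h i p else 0) =
   v ord0 o * partial h o p + \sum_(i < n) (if (i < k)%N then v ord0 i * partial h i p else 0).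
  rewrite (bigD1 o) //= ltnSn [X in _ = _ + X](bigD1 o) //= ltnn add0r; congr (_ + _).
  apply: eq_bigr => i io; rewrite ltnS leq_eqVlt.
  by have -> : (val i == k) = false by apply/negbTE; move: io; apply: contra => /eqP ik; apply/eqP/val_inj.
rewrite Sk.
have E : (fun t : R => t^-1 * (h (p + t *: trunc k.+1 v) - h p)) =
  (fun t => t^-1 * (h (p + t *: trunc k v + (t * v ord0 o) *: ebasis R o) - h (p + t *: trunc k v)))
  + (fun t => t^-1 * (h (p + t *: trunc k v) - h p)).
  apply/funext => t /=; rewrite Tr scalerDr scalerA addrA -mulrDr.
  by congr (_ * _); rewrite addrA subrK.
rewrite E; apply: cvgD; first by apply: L1 => //; apply: Hc.
by apply: IH; apply: ltnW.
Qed.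

Lemma core {n : nat} (h : 'rV[R]_n -> R) (x v : 'rV[R]_n) (s0 : R) :
  (forall i y, derivable h y (ebasis R i)) -> (forall i, continuous (partial h i)) ->
  is_derive s0 (1:R) (fun s => h (x + s *: v))
     (\sum_(i < n) v ord0 i * partial h i (x + s0 *: v)).
Proof.
move=> Hd Hc; apply: is_derive_lim.
have := core_k (p:=x + s0 *: v) (v:=v) Hd Hc (leqnn n).
have -> : trunc n v = v by apply/rowP => j; rewrite !mxE ltn_ord.
under eq_bigr do rewrite ltn_ord.
suff -> : (fun t : R => t^-1 * (h (x + (t + s0) *: v) - h (x + s0 *: v))) =
  (fun t => t^-1 * (h (x + s0 *: v + t *: v) - h (x + s0 *: v))) by [].
apply/funext => t.
by rewrite scalerDl addrA [x + _ + _]addrAC.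
Qed.
Definition dphi {n : nat} (f : 'rV[R]_n -> R) (x v : 'rV[R]_n) (s : R) : R :=
  \sum_(i < n) v ord0 i * partial f i (x + s *: v).

Lemma d1 {n : nat} (f : 'rV[R]_n -> R) (x v : 'rV[R]_n) (s : R) :
  twice_cont_diff f -> is_derive s (1:R) (fun s => f (x + s *: v)) (dphi f x v s).
Proof. by move=> [_ [Hd [Hc _]]]; apply: core. Qed.

Lemma d2 {n : nat} (f : 'rV[R]_n -> R) (x v : 'rV[R]_n) (s : R) :
  twice_cont_diff f -> is_derive s (1:R) (dphi f x v) (qform (hessian f (x + s *: v)) v).
Proof.
move=> [_ [_ [Hc1 [Hd2 Hc2]]]].
have E : dphi f x v = \sum_(i < n) (fun s => v ord0 i * partial f i (x + s *: v)).
  by rewrite fct_sumE.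
rewrite E; apply: is_derive_eq.
  apply: is_derive_sum => i.
  have H := core x v s (Hd2 i) (Hc2 i).
  exact: (is_deriveZ (v ord0 i) H).
rewrite /qform; apply: eq_bigr => i _.
rewrite [_ *: _]mulr_sumr; apply: eq_bigr => j _.
by rewrite mxE; ring.
Qed.
Definition dot {n : nat} (a b : 'rV[R]_n) : R := \sum_(i < n) a ord0 i * b ord0 i.

Lemma sumsq_ge0 {n : nat} (v : 'rV[R]_n) : 0 <= \sum_(i < n) v ord0 i ^+ 2.
Proof. by apply: sumr_ge0 => i _; apply: sqr_ge0. Qed.

Lemma l2sq {n : nat} (v : 'rV[R]_n) : l2norm v ^+ 2 = \sum_(i < n) v ord0 i ^+ 2.
Proof. by rewrite /l2norm sqr_sqrtr // sumsq_ge0. Qed.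

Lemma l2_ge0 {n : nat} (v : 'rV[R]_n) : 0 <= l2norm v.
Proof. exact: sqrtr_ge0. Qed.

Lemma l2normZ {n : nat} (a : R) (v : 'rV[R]_n) : l2norm (a *: v) = `|a| * l2norm v.
Proof.
rewrite /l2norm -sqrtr_sqr -sqrtrM ?sqr_ge0 //; congr (Num.sqrt _).
by rewrite mulr_sumr; apply: eq_bigr => i _; rewrite mxE exprMn.
Qed.

Lemma l2normN {n : nat} (v : 'rV[R]_n) : l2norm (- v) = l2norm v.
Proof. by rewrite -scaleN1r l2normZ normrN normr1 mul1r. Qed.

Lemma l2norm_gt0 {n : nat} (v : 'rV[R]_n) : v != 0 -> 0 < l2norm v.
Proof.
move=> v0; rewrite lt_def l2_ge0 andbT; apply/negP => /eqP H.
move/negP: v0; apply; apply/eqP/rowP => j; rewrite mxE.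
have S0 : \sum_(i < n) v ord0 i ^+ 2 = 0 by rewrite -l2sq H expr2 mulr0.
have := (psumr_eq0P (P := predT) (F := fun i => v ord0 i ^+ 2)) (fun i _ => sqr_ge0 _) S0 j isT.
by move/eqP; rewrite sqrf_eq0 => /eqP.
Qed.

Lemma CS {n : nat} (a b : 'rV[R]_n) : dot a b <= l2norm a * l2norm b.
Proof.
set A := \sum_(i < n) a ord0 i ^+ 2.
set B := \sum_(i < n) b ord0 i ^+ 2.
set C := dot a b.
have A0 : 0 <= A by apply: sumsq_ge0.
have B0 : 0 <= B by apply: sumsq_ge0.
have key : C ^+ 2 <= A * B.
  have [Az|Ap] := eqVneq A 0.
    have C0 : C = 0.
      rewrite /C /dot big1 // => i _.
      have := (psumr_eq0P (P := predT) (F := fun i => a ord0 i ^+ 2)) (fun i _ => sqr_ge0 _) Az i isT.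
      by move/eqP; rewrite sqrf_eq0 => /eqP ->; rewrite mul0r.
    by rewrite C0 Az expr2 !mul0r.
  have Apos : 0 < A by rewrite lt_def Ap A0.
  have E : \sum_(i < n) (A * b ord0 i - C * a ord0 i) ^+ 2 = A * (A * B - C ^+ 2).
    rewrite (eq_bigr (fun i => A ^+ 2 * b ord0 i ^+ 2 - (2 * A * C) * (a ord0 i * b ord0 i)
                              + C ^+ 2 * a ord0 i ^+ 2)); last by move=> i _; ring.
    rewrite big_split sumrB /= -!mulr_sumr -/A -/B.
    by rewrite -/(dot a b) -/C; ring.
  have : 0 <= A * (A * B - C ^+ 2) by rewrite -E; apply: sumr_ge0 => i _; apply: sqr_ge0.
  rewrite pmulr_rge0 // subr_ge0 //.
rewrite /l2norm -/A -/B -sqrtrM //.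
apply: (le_trans (ler_norm C)); rewrite -sqrtr_sqr ler_sqrt //.
by rewrite mulr_ge0.
Qed.
Lemma MVTseg (g dg : R -> R) (b : R) :
  (forall u : R, is_derive u (1:R) g (dg u)) -> 0 <= b ->
  exists th, 0 <= th <= b /\ g b - g 0 = dg th * b.
Proof.
move=> D b0.
have Cw : {within `[0, b], continuous g}.
  by apply: continuous_subspaceT; apply: derive_cont D.
have [c cab E] := @MVT_segment R g dg 0 b b0 (fun x _ => D x) Cw.
by exists c; rewrite E subr0; split => //; move: cab; rewrite in_itv.
Qed.

Lemma poly_derive (a b s : R) :
  is_derive s (1:R) (fun s => s * a + s * s * b) (a + 2 * s * b).
Proof.
apply: is_derive_lim.
apply/cvgrPdist_lt => e e0; apply/near0'P.
have b1 : 0 < `|b| + 1 by rewrite ltr_pwDr.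
exists (e / (`|b| + 1)); first by rewrite divr_gt0.
move=> t te t0.
have -> : t^-1 * ((t + s) * a + (t + s) * (t + s) * b - (s * a + s * s * b)) =
  a + 2 * s * b + t * b by field.
rewrite opprD addrA subrr sub0r normrN normrM.
move: te; rewrite ltr_pdivlMr // => te.
apply: le_lt_trans te; rewrite mulrDr mulr1 ler_wpDr //.
Qed.
Lemma qformZ {n : nat} (a : R) (A : 'M[R]_n) (v : 'rV[R]_n) :
  qform (a *: A) v = a * qform A v.
Proof.
rewrite /qform mulr_sumr; apply: eq_bigr => i _; rewrite mulr_sumr.
by apply: eq_bigr => j _; rewrite mxE; ring.
Qed.

Lemma l2norm0 {n : nat} : l2norm (0 : 'rV[R]_n) = 0.
Proof. by rewrite -(scale0r (0 : 'rV[R]_n)) l2normZ normr0 mul0r. Qed.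

Lemma eta_facts {n : nat} (f : 'rV[R]_n -> R) gamma mu x :
  0 < gamma -> 0 < mu -> 0 < f x ->
  0 < step_size gamma mu f x /\ step_size gamma mu f x <= (2 * mu * f x)^-1 /\
  step_size gamma mu f x * l2norm (grad f x) <= gamma^-1.
Proof.
move=> g0 m0 f0.
have a0 : 0 < (2 * mu * f x)^-1 by rewrite invr_gt0 !mulr_gt0.
rewrite /step_size; case: eqP => [->|/eqP gn0].
  by rewrite l2norm0 mulr0 invr_ge0 (ltW g0) lexx.
have l0 := l2norm_gt0 gn0.
have b0 : 0 < (gamma * l2norm (grad f x))^-1 by rewrite invr_gt0 mulr_gt0.
rewrite /Order.min; case: (ltP (2 * mu * f x)^-1 (gamma * l2norm (grad f x))^-1) => H.
  split => //; split => //.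
  apply: (le_trans (ler_wpM2r (l2_ge0 _) (ltW H))).
  by rewrite invfM mulfVK // gt_eqF.
split => //; split => //.
by rewrite invfM mulfVK // gt_eqF.
Qed.

Lemma descent {n : nat} (f : 'rV[R]_n -> R) gamma mu x :
  twice_cont_diff f -> 0 < gamma -> 0 < mu -> (forall x, 0 < f x) ->
  second_order_robust gamma f -> mult_smooth mu f ->
  f (x - step_size gamma mu f x *: grad f x) <=
    f x - step_size gamma mu f x * l2norm (grad f x) ^+ 2 / 2.
Proof.
move=> TC g0 m0 fpos Rob [_ MS].
have [e0 [e1 e2]] := eta_facts (f:=f) (x:=x) g0 m0 (fpos x).
set eta := step_size gamma mu f x in e0 e1 e2 *.
set g := grad f x in e2 *.
set v := - g.
set M := 2 * mu * f x * l2norm v ^+ 2.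
have Hb : forall s, 0 <= s <= eta -> qform (hessian f (x + s *: v)) v <= M.
  move=> s /andP [s0 se].
  have Hn : l2norm ((x + s *: v) - x) <= gamma^-1.
    rewrite addrAC subrr add0r l2normZ ger0_norm // l2normN.
    by apply: le_trans e2; apply: ler_wpM2r => //; apply: l2_ge0.
  have [_ H2] := Rob x (x + s *: v) Hn.
  apply: (le_trans (H2 v)); rewrite qformZ /M -!mulrA ler_pM2l //.
  by rewrite mulrA; apply: MS.
set phi := fun s => f (x + s *: v).
set a := dphi f x v 0.
have Dchi : forall s, is_derive s (1:R) (phi - (fun s => s * a + s * s * (M / 2)))
              (dphi f x v s - (a + 2 * s * (M / 2))).
  move=> s; apply: is_deriveB; first exact: d1.
  exact: poly_derive.
have [th [/andP [th0 the] E1]] := MVTseg (b:=eta) Dchi (ltW e0).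
have [ze [/andP [ze0 zet] E2]] := MVTseg (b:=th) (fun s => d2 x v s TC) th0.
have Hd : dphi f x v th - a <= M * th.
  rewrite /a E2; apply: ler_wpM2r => //; apply: Hb.
  by rewrite ze0 (le_trans zet the).
have chi_le : (phi - (fun s => s * a + s * s * (M / 2))) eta <=
              (phi - (fun s => s * a + s * s * (M / 2))) 0.
  rewrite -subr_le0 E1; apply: mulr_le0_ge0; last exact: ltW.
  by move: Hd; set dd := dphi f x v th; lra.
have chi_le' : phi eta - (eta * a + eta * eta * (M / 2)) <=
   phi 0 - (0 * a + 0 * 0 * (M / 2)) := chi_le.
move: chi_le'; rewrite /phi scale0r addr0 !mul0r addr0 subr0.
have Ea : a = - l2norm g ^+ 2.
  rewrite /a /dphi l2sq -sumrN; apply: eq_bigr => i _.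
  by rewrite scale0r addr0 /v /g mxE [grad _ _ _ _]mxE; ring.
have Ev : l2norm v ^+ 2 = l2norm g ^+ 2 by rewrite /v l2normN.
rewrite Ea /M Ev scalerN -/(x - eta *: g) => H.
have fx0 := fpos x.
have G0 : 0 <= l2norm g ^+ 2 by apply: sqr_ge0.
have e1' : eta * (2 * mu * f x) <= 1.
  by rewrite -(ler_pdivlMr _ _ (mulr_gt0 (mulr_gt0 _ m0) fx0)) ?mul1r // ltr0n.
set G := l2norm g ^+ 2 in G0 H *.
set F1 := f (x - eta *: g) in H *.
have P : 0 <= (1 - eta * (2 * mu * f x)) * (eta * G).
  by apply: mulr_ge0; [rewrite subr_ge0 | apply: mulr_ge0 => //; apply: ltW].
nra.
Qed.
Lemma convex_grad {n : nat} (f : 'rV[R]_n -> R) (x xs : 'rV[R]_n) :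
  twice_cont_diff f -> convex_fun f -> f x + dot (grad f x) (xs - x) <= f xs.
Proof.
move=> TC CV.
set w := xs - x.
have Ea : dphi f x w 0 = dot (grad f x) w.
  rewrite /dphi /dot; apply: eq_bigr => i _.
  by rewrite scale0r addr0 [grad _ _ _ _]mxE mulrC.
rewrite -Ea; set a := dphi f x w 0.
set K := f xs - f x.
suff : a <= K by rewrite /K; lra.
have Hconv : forall t, 0 < t <= 1 -> f (x + t *: w) - f x <= t * K.
  move=> t /andP [t0 t1].
  have := CV x xs t; rewrite ltW //= t1 => /(_ isT).
  have -> : (1 - t) *: x + t *: xs = x + t *: w.
    by rewrite /w scalerBl scale1r scalerBr addrAC addrA.
  by rewrite /K; lra.
have [//|Hlt] := leP a K.
have L := is_derive_limE (d1 x w 0 TC).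
have eK : 0 < a - K by rewrite subr_gt0.
have H : \forall t \near 0^', `|a - t^-1 * (f (x + (t + 0) *: w) - f (x + 0 *: w))| < a - K.
  by move: L => /cvgrPdist_lt; apply.
have [d d0 Hd] := proj1 (near0'P _) H.
set t := Order.min (d / 2) 1.
have t0 : 0 < t by rewrite /t lt_min ltr01 andbT divr_gt0.
have t1 : t <= 1 by rewrite /t ge_min lexx orbT.
have td : `|t| < d.
  rewrite gtr0_norm //; apply: (le_lt_trans (y := d / 2)); first by rewrite /t ge_min lexx.
  by rewrite ltr_pdivrMr // ltr_pMr // ltr1n.
have := Hd t td (lt0r_neq0 t0).
rewrite addr0 scale0r addr0.
have := Hconv t; rewrite t0 t1 => /(_ isT) Hc.
have Hq : t^-1 * (f (x + t *: w) - f x) <= K.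
  by rewrite ler_pdivrMl // mulrC.
move=> Habs; have := le_lt_trans (ler_norm _) Habs; lra.
Qed.
Lemma lnstep (D D' c : R) : 0 < D' -> 0 < D -> D' <= D * (1 - c) -> c <= ln D - ln D'.
Proof.
move=> D'0 D0 H.
have y0 : 0 < D' / D by rewrite divr_gt0.
have -> : ln D' = ln D + ln (D' / D).
  by rewrite -lnM ?posrE // mulrC divfK // gt_eqF.
have Hy : ln (D' / D) <= D' / D - 1.
  have := @le_ln1Dx R (D' / D - 1).
  have -> : 1 + (D' / D - 1) = D' / D by rewrite addrC subrK.
  apply; lra.
have : D' / D <= 1 - c by rewrite ler_pdivrMr // mulrC.
lra.
Qed.

Lemma pot_real (A B fs D D' lg Rr mu gam eta : R) :
  0 < mu -> 0 < gam -> 0 < fs -> 0 < Rr -> 0 < D' -> 0 <= lg -> 0 <= eta ->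
  D' <= D - eta * lg ^+ 2 / 2 -> D <= lg * Rr ->
  A = 8 * mu * Rr ^+ 2 -> B = 2 * gam * Rr ->
  (eta = (2 * mu * (fs + D))^-1 \/ (eta = (gam * lg)^-1 /\ 0 < lg)) ->
  1 <= (A + B) * (ln D - ln D') + A * fs * (D'^-1 - D^-1).
Proof.
move=> m0 g0 fs0 R0 D'0 lg0 eta0 Hdec HD EA EB Heta.
have q0 : 0 <= eta * lg ^+ 2 / 2 by rewrite !mulr_ge0 // sqr_ge0.
have D'D : D' <= D by lra.
have D0 : 0 < D by lra.
have A0 : 0 < A by rewrite EA !mulr_gt0 // exprn_gt0.
have B0 : 0 < B by rewrite EB !mulr_gt0.
have T2 : 0 <= A * fs * (D'^-1 - D^-1).
  apply: mulr_ge0; first by rewrite mulr_ge0 // ltW.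
  by rewrite subr_ge0 lef_pV2 ?posrE.
have T1 : 0 <= ln D - ln D'.
  by rewrite subr_ge0 ler_ln ?posrE.
set q := eta * lg ^+ 2 / 2 in q0 Hdec.
have LR : D ^+ 2 <= lg ^+ 2 * Rr ^+ 2.
  rewrite -exprMn !expr2; nra.
case: Heta => [Ea|[Eb lp]].
- have Hq : q * A * (fs + D) = 2 * (lg ^+ 2 * Rr ^+ 2).
    rewrite /q Ea EA; field.
    by rewrite !gt_eqF // addr_gt0.
  have [Dfs|Dfs] := leP fs D.
  +
    have qA : D <= q * A.
      have fsD0 : 0 < fs + D by rewrite addr_gt0.
      rewrite -(ler_pM2r fsD0) Hq; nra.
    have H1 : D' <= D * (1 - A^-1).
      have : D * A^-1 <= q by rewrite ler_pdivrMr // mulrC.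
      move=> Hh; have -> : D * (1 - A^-1) = D - D * A^-1 by ring.
      lra.
    have := lnstep D'0 D0 H1.
    move=> L; have : (A + B) * A^-1 <= (A + B) * (ln D - ln D').
      by apply: ler_wpM2l => //; rewrite addr_ge0 ?ltW.
    have -> : (A + B) * A^-1 = 1 + B / A by field; rewrite gt_eqF.
    have : 0 <= B / A by rewrite divr_ge0 ?ltW.
    lra.
  +
    have qA : D ^+ 2 <= q * A * fs.
      have H2 : q * A * (fs + D) <= q * A * (2 * fs).
        by apply: ler_wpM2l; [rewrite mulr_ge0 // ltW | lra].
      nra.
    have Hk : 1 <= A * fs * (D'^-1 - D^-1).
      have -> : A * fs * (D'^-1 - D^-1) = A * fs * (D - D') / (D * D').
        by field; rewrite !gt_eqF.
      rewrite ler_pdivlMr ?mulr_gt0 // mul1r.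
      have : A * fs * q <= A * fs * (D - D') by apply: ler_wpM2l; [rewrite mulr_ge0 // ltW | lra].
      have : q * A * fs = A * fs * q by ring.
      move=> E1 E2; have : D ^+ 2 <= A * fs * (D - D') by lra.
      nra.
    have : 0 <= (A + B) * (ln D - ln D') by rewrite mulr_ge0 // addr_ge0 ?ltW.
    lra.
- have Hq : q * B = lg * Rr.
    rewrite /q Eb EB; field.
    by rewrite !gt_eqF.
  have H1 : D' <= D * (1 - B^-1).
    have : D * B^-1 <= q by rewrite ler_pdivrMr // Hq.
    move=> Hh; have -> : D * (1 - B^-1) = D - D * B^-1 by ring.
    lra.
  have := lnstep D'0 D0 H1.
  move=> L; have : (A + B) * B^-1 <= (A + B) * (ln D - ln D').
    by apply: ler_wpM2l => //; rewrite addr_ge0 ?ltW.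
  have -> : (A + B) * B^-1 = 1 + A / B by field; rewrite gt_eqF.
  have : 0 <= A / B by rewrite divr_ge0 ?ltW.
  lra.
Qed.
Lemma dot_neg {n : nat} (g x xs : 'rV[R]_n) : dot g (x - xs) = - dot g (xs - x).
Proof. by rewrite /dot -sumrN; apply: eq_bigr => i _; rewrite !mxE; ring. Qed.

Lemma expand {n : nat} (x g xs : 'rV[R]_n) (eta : R) :
  l2norm (x - eta *: g - xs) ^+ 2 =
  l2norm (x - xs) ^+ 2 - 2 * eta * dot g (x - xs) + eta ^+ 2 * l2norm g ^+ 2.
Proof.
rewrite !l2sq /dot.
rewrite (eq_bigr (fun i => (x ord0 i - xs ord0 i) ^+ 2 - (2 * eta) * (g ord0 i * (x ord0 i - xs ord0 i))
                          + eta ^+ 2 * g ord0 i ^+ 2)); last first.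
  by move=> i _; rewrite !mxE; ring.
rewrite big_split sumrB /= -!mulr_sumr.
by congr (_ - _ * _ + _); apply: eq_bigr => i _; rewrite !mxE.
Qed.

Lemma gd_step {n : nat} (f : 'rV[R]_n -> R) gamma mu (x xs : 'rV[R]_n) (Rr delta eps : R) :
  twice_cont_diff f -> convex_fun f -> (forall x, 0 < f x) -> 0 < gamma -> 0 < mu ->
  second_order_robust gamma f -> mult_smooth mu f -> 0 < delta -> 0 < eps ->
  l2norm (x - xs) <= Rr ->
  delta * f xs + eps < f (x - step_size gamma mu f x *: grad f x) - f xs ->
  l2norm (x - step_size gamma mu f x *: grad f x - xs) <= l2norm (x - xs) /\
  1 <= (8 * mu * Rr ^+ 2 + 2 * gamma * Rr) *
        (ln (f x - f xs) - ln (f (x - step_size gamma mu f x *: grad f x) - f xs))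
       + 8 * mu * Rr ^+ 2 * f xs *
        ((f (x - step_size gamma mu f x *: grad f x) - f xs)^-1 - (f x - f xs)^-1).
Proof.
move=> TC CV fpos g0 m0 Rob MS d0 e0 rR Hgt.
have desc := descent x TC g0 m0 fpos Rob MS.
have [et0 [et1 et2]] := eta_facts (f:=f) (x:=x) g0 m0 (fpos x).
have conv := convex_grad x xs TC CV.
set eta := step_size gamma mu f x in desc et0 et1 et2 Hgt *.
set g := grad f x in desc et2 conv Hgt *.
set x' := x - eta *: g in desc Hgt *.
set lg := l2norm g in desc et2 *.
set r := l2norm (x - xs) in rR *.
set fs := f xs in conv Hgt *.
set D := f x - fs.
set D' := f x' - fs in Hgt *.
have fs0 : 0 < fs by apply: fpos.
have D'0 : 0 < D' by apply: le_lt_trans Hgt; rewrite addr_ge0 // ?mulr_ge0 ?ltW.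
have lg0 : 0 <= lg by apply: l2_ge0.
have r0 : 0 <= r by apply: l2_ge0.
have Hdec : D' <= D - eta * lg ^+ 2 / 2 by rewrite /D' /D; lra.
have Hdot : D <= dot g (x - xs) by rewrite dot_neg /D; lra.
have HCS : dot g (x - xs) <= lg * r by apply: CS.
have HD : D <= lg * Rr by apply: (le_trans Hdot); apply: (le_trans HCS); apply: ler_wpM2l.
have q0 : 0 <= eta * lg ^+ 2 / 2 by rewrite !mulr_ge0 // ?ltW // sqr_ge0.
have D0 : 0 < D by lra.
have lgp : 0 < lg.
  rewrite lt_def lg0 andbT; apply/eqP => E; move: HCS; rewrite E mul0r; lra.
have R0 : 0 < Rr by nra.
have gn0 : g != 0 by apply/eqP => E; move: lgp; rewrite /lg E l2norm0 ltxx.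
split.
  have Ex := expand x g xs eta.
  rewrite -/x' -/r -/lg in Ex.
  have r'0 : 0 <= l2norm (x' - xs) by apply: l2_ge0.
  set r' := l2norm (x' - xs) in Ex r'0 *.
  have H1 : eta * lg ^+ 2 <= 2 * dot g (x - xs) by lra.
  have H2 : eta ^+ 2 * lg ^+ 2 <= 2 * eta * dot g (x - xs).
    have -> : eta ^+ 2 * lg ^+ 2 = eta * (eta * lg ^+ 2) by ring.
    rewrite -mulrA [2 * _]mulrC -mulrA [dot _ _ * _]mulrC; apply: ler_wpM2l; first exact: ltW.
    done.
  have : r' ^+ 2 <= r ^+ 2 by lra.
  rewrite !expr2; nra.
apply: (@pot_real _ _ fs D D' lg Rr mu gamma eta) => //.
- exact: ltW.
- have Ea : (2 * mu * f x)^-1 = (2 * mu * (fs + D))^-1 by rewrite /D addrC subrK.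
  move: et1; rewrite /eta /step_size (negbTE gn0) /Order.min -/g -/lg.
  case: (ltP (2 * mu * f x)^-1 (gamma * lg)^-1) => _ _.
    by left.
  by right.
Qed.
Lemma gd_mono {n : nat} (f : 'rV[R]_n -> R) gamma mu (x0 : 'rV[R]_n) :
  twice_cont_diff f -> (forall x, 0 < f x) -> 0 < gamma -> 0 < mu ->
  second_order_robust gamma f -> mult_smooth mu f ->
  forall t, f (gd gamma mu f x0 t) <= f x0.
Proof.
move=> TC fpos g0 m0 Rob MS; elim=> [|t IH] //=.
apply: le_trans IH.
set x := gd gamma mu f x0 t.
apply: (le_trans (descent x TC g0 m0 fpos Rob MS)).
have [e0 _] := eta_facts (f:=f) (x:=x) g0 m0 (fpos x).
rewrite lerBlDr lerDl; apply: mulr_ge0; last by [].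
by apply: mulr_ge0; [apply: ltW | apply: sqr_ge0].
Qed.

Lemma main1b {n : nat} (f : 'rV[R]_n -> R) gamma mu (x0 xs : 'rV[R]_n) (delta eps : R) (T : nat) :
  twice_cont_diff f -> convex_fun f -> (forall x, 0 < f x) -> 0 < gamma -> 0 < mu ->
  second_order_robust gamma f -> mult_smooth mu f -> 0 < delta -> 0 < eps ->
  eps < f x0 - f xs ->
  8 * (mu * l2norm (x0 - xs) ^+ 2 * (delta^-1 + ln ((f x0 - f xs) / eps)) +
       gamma * l2norm (x0 - xs) * ln ((f x0 - f xs) / eps)) <= T%:R ->
  f (gd gamma mu f x0 T) <= (1 + delta) * f xs + eps.
Proof.
move=> TC CV fpos g0 m0 Rob MS d0 e0 D0e HT.
set Rd := l2norm (x0 - xs) in HT.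
set fs := f xs.
set D0 := f x0 - fs in D0e HT.
set L := ln (D0 / eps) in HT.
set A := 8 * mu * Rd ^+ 2.
set A' := A + 2 * gamma * Rd.
have fs0 : 0 < fs by apply: fpos.
have L0 : 0 < L by rewrite /L ln_gt0 // ltr_pdivlMr // mul1r.
have Rd0 : 0 < Rd.
  rewrite /Rd lt_def l2_ge0 andbT; apply/eqP => E.
  have : x0 - xs != 0 -> False by move=> /l2norm_gt0; rewrite E ltxx.
  move=> H; apply: H; apply/eqP => E2; move: D0e; rewrite /D0 /fs.
  by move/eqP: E2; rewrite subr_eq0 => /eqP ->; rewrite subrr; lra.
have A0 : 0 < A by rewrite /A !mulr_gt0 // exprn_gt0.
have A'0 : 0 <= A'.
  by apply: addr_ge0; [apply: ltW | rewrite !mulr_ge0 // ltW].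
rewrite leNgt; apply/negP => HTgt.
set Dt := fun t => f (gd gamma mu f x0 t) - fs.
have Claim : forall t, delta * fs + eps < Dt t ->
   l2norm (gd gamma mu f x0 t - xs) <= Rd /\
   t%:R <= A' * (ln D0 - ln (Dt t)) + A * fs * ((Dt t)^-1 - D0^-1).
  elim=> [|t IH] H.
    by rewrite /Dt /= -/D0 !subrr !mulr0 addr0.
  have mono : Dt t.+1 <= Dt t.
    rewrite /Dt lerD2r /=; set x := gd gamma mu f x0 t.
    apply: (le_trans (descent x TC g0 m0 fpos Rob MS)).
    have [e0' _] := eta_facts (f:=f) (x:=x) g0 m0 (fpos x).
    rewrite lerBlDr lerDl; apply: mulr_ge0; last by [].
    by apply: mulr_ge0; [apply: ltW | apply: sqr_ge0].
  have [IH1 IH2] := IH (lt_le_trans H mono).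
  have := gd_step TC CV fpos g0 m0 Rob MS d0 e0 IH1 H.
  move=> [S1 S2]; split; first exact: le_trans IH1.
  rewrite -/A -/A' -/fs in S2.
  have -> : (t.+1%:R : R) = t%:R + 1 by rewrite -addn1 natrD.
  move: S2 IH2; rewrite /Dt /=.
  set P := ln (f (gd gamma mu f x0 t) - fs).
  set Q := ln (f (_ - _ *: _) - fs).
  set U := (f (_ - _ *: _) - fs)^-1.
  set V := (f (gd gamma mu f x0 t) - fs)^-1.
  move=> S2 IH2.
  have E : A' * (ln D0 - Q) + A * fs * (U - D0^-1) =
     (A' * (ln D0 - P) + A * fs * (V - D0^-1)) + (A' * (P - Q) + A * fs * (U - V)) by ring.
  rewrite E; lra.
have HDT : delta * fs + eps < Dt T.
  by rewrite /Dt; move: HTgt; rewrite -/fs; lra.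
have [_ HC] := Claim T HDT.
have DT0 : 0 < Dt T by apply: le_lt_trans HDT; rewrite addr_ge0 ?mulr_ge0 ?ltW.
have D00 : 0 < D0 by lra.
have Hln : ln D0 - ln (Dt T) < L.
  have : 0 < delta * fs by rewrite mulr_gt0.
  rewrite /L ln_div ?posrE //; rewrite ltrD2l ltrN2 ltr_ln ?posrE //; lra.
have H1 : A' * (ln D0 - ln (Dt T)) <= A' * L by apply: ler_wpM2l => //; apply: ltW.
have H2 : A * fs * ((Dt T)^-1 - D0^-1) < A / delta.
  have : A * fs * ((Dt T)^-1 - D0^-1) <= A * fs * (Dt T)^-1.
    apply: ler_wpM2l; first by rewrite mulr_ge0 // ltW.
    have : 0 <= D0^-1 by rewrite invr_ge0 ltW.
    lra.
  move=> /le_lt_trans; apply.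
  rewrite -mulrA ltr_pM2l // ltr_pdivrMr // mulrC -ltr_pdivrMl // mulrC.
  rewrite ltr_pdivrMr // mulrC ltr_pdivlMr // mulrC; move: HDT; lra.
have E8 : A / delta + A' * L <= 8 * (mu * Rd ^+ 2 * (delta^-1 + L) + gamma * Rd * L).
  rewrite /A' /A.
  have : 0 <= gamma * Rd * L by rewrite !mulr_ge0 ?ltW.
  move=> P; rewrite mulrDr mulrDr; lra.
have : (T%:R : R) < T%:R by lra.
by rewrite ltxx.
Qed.
End S.
Unset Implicit Arguments.

Theorem theorem3 (R : realType) :
  exists c c' : R, 0 < c /\ 0 < c' /\
  (forall (n : nat) (f : 'rV[R]_n -> R) (gamma mu : R) (x0 xs : 'rV[R]_n)
          (delta eps : R) (T : nat),
     twice_cont_diff f -> convex_fun f -> (forall x, 0 < f x) ->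
     0 < gamma -> 0 < mu ->
     second_order_robust gamma f -> mult_smooth mu f ->
     0 < delta < 1 -> 0 < eps ->
     let Rd := l2norm (x0 - xs) in
     let L := ln ((f x0 - f xs) / eps) in
     c * (mu * Rd ^+ 2 * (delta^-1 + L) + gamma * Rd * L) <= T%:R ->
     f (gd gamma mu f x0 T) <= (1 + delta) * f xs + eps) /\
  (forall (n : nat) (f : 'rV[R]_n -> R) (gamma mu beta : R) (m : nat)
          (x0 xs : 'rV[R]_n) (delta eps : R) (T : nat),
     twice_cont_diff f -> convex_fun f -> (forall x, 0 < f x) ->
     0 < gamma -> 0 < mu ->
     second_order_robust gamma f -> mult_smooth mu f ->
     0 < beta -> (0 < m)%N ->
     gamma <= 2 * Num.sqrt beta -> mu <= beta / m%:R ->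
     0 < delta < 1 -> 0 < eps ->
     let Rd := l2norm (x0 - xs) in
     let L := ln ((f x0 - f xs) / eps) in
     c' * (beta * Rd ^+ 2 / m%:R * (delta^-1 + L) + Num.sqrt beta * Rd * L) <= T%:R ->
     f (gd gamma mu f x0 T) <= (1 + delta) * f xs + eps).
Proof.
exists 8, 16; split; first by [].
split; first by [].
have easy : forall (n : nat) (f : 'rV[R]_n -> R) (gamma mu : R) (x0 xs : 'rV[R]_n)
          (delta eps : R) (T : nat),
     twice_cont_diff f -> (forall x, 0 < f x) -> 0 < gamma -> 0 < mu ->
     second_order_robust gamma f -> mult_smooth mu f -> 0 < delta ->
     f x0 - f xs <= eps -> f (gd gamma mu f x0 T) <= (1 + delta) * f xs + eps.
  move=> n f gamma mu x0 xs delta eps T TC fpos g0 m0 Rob MS d0 H.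
  have := gd_mono x0 TC fpos g0 m0 Rob MS T.
  have : 0 < delta * f xs by rewrite mulr_gt0.
  lra.
split.
  move=> n f gamma mu x0 xs delta eps T TC CV fpos g0 m0 Rob MS /andP [d0 d1] e0 Rd L HT.
  have [H|H] := leP (f x0 - f xs) eps; first exact: easy.
  exact: main1b.
move=> n f gamma mu beta m x0 xs delta eps T TC CV fpos g0 m0 Rob MS b0 mpos gb mb
   /andP [d0 d1] e0 Rd L HT.
have [H|H] := leP (f x0 - f xs) eps; first exact: easy.
apply: (main1b TC CV fpos g0 m0 Rob MS d0 e0 H).
apply: le_trans HT.
have L0 : 0 < L by rewrite /L ln_gt0 // ltr_pdivlMr // mul1r.
have Rd0 : 0 <= Rd by apply: l2_ge0.
have m0' : 0 < (m%:R : R) by rewrite ltr0n.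
have S0 : 0 <= Num.sqrt beta by apply: sqrtr_ge0.
have K0 : 0 < delta^-1 + L by rewrite addr_gt0 // invr_gt0.
have H1 : mu * Rd ^+ 2 * (delta^-1 + L) <= beta * Rd ^+ 2 / m%:R * (delta^-1 + L).
  apply: ler_wpM2r; first exact: ltW.
  have -> : beta * Rd ^+ 2 / m%:R = beta / m%:R * Rd ^+ 2 by rewrite mulrAC.
  by apply: ler_wpM2r => //; apply: sqr_ge0.
have H2 : gamma * Rd * L <= 2 * (Num.sqrt beta * Rd * L).
  rewrite !mulrA; apply: ler_wpM2r; first exact: ltW.
  by apply: ler_wpM2r.
have H3 : 0 <= beta * Rd ^+ 2 / m%:R * (delta^-1 + L).
  apply: mulr_ge0; last exact: ltW.
  by apply: mulr_ge0; [apply: mulr_ge0; [apply: ltW | apply: sqr_ge0] | rewrite invr_ge0 ltW].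
rewrite /Rd /L in H1 H2 H3 *.
lra.
Qed.
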